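(* Let $n\ge 3$ be an integer. Let $F_k$ be the Fibonacci numbers ($F_0=0$, $F_1=1$, $F_{k+2}=F_k+F_{k+1}$) and $L_k$ the Lucas numbers ($L_1=1$, $L_2=3$, $L_{k+2}=L_k+L_{k+1}$). Set $d=\gcd(F_{n-2}+1,F_{n-1}-1)$, $\mu=(F_{n-1}-1)/d$, $\nu=(F_{n-2}+1)/d$ and $t=(L_n-1-(-1)^n)/d$. For given $r,s$ put $h=-(s\mu+r\nu)d$. Then: (i) if $n\equiv 0\pmod 4$: $d=F_{n/2}$, $t=5F_{n/2}$, and for $r=F_{n/2-1}$, $s=-F_{n/2-2}$ one has $r\mu+s(\mu+\nu)=1$ and $h=-2F_{n/2}$; (ii) if $n\equiv 2\pmod 4$: $d=L_{n/2}$, $t=L_{n/2}$, and for $r=F_{n/2-2}$, $s=-F_{n/2-3}$ one has $r\mu+s(\mu+\nu)=1$ and $h=-L_{n/2}$; (iii) if $n\equiv 1,5,7,$ or $11\pmod{12}$: $d=1$, $t=L_n$, and for $r=(F_{n-2}-1)/2$, $s=(1-F_{n-3})/2$ (rational numbers) one has $r\mu+s(\mu+\nu)=1$ and $h=(1-L_{n-2})/2$; (iv) if $n\equiv 3$ or $9\pmod{12}$: $d=2$, $t=L_n/2$, and for $r=F_{n-2}-1$, $s=1-F_{n-3}$ one has $r\mu+s(\mu+\nu)=1$ and $h=1-L_{n-2}$. *)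

(* Defs.v *)
From mathcomp Require Import all_boot all_order all_algebra.
Set Implicit Arguments. Unset Strict Implicit. Unset Printing Implicit Defensive.
Import Order.TTheory GRing.Theory Num.Theory.

Fixpoint fib (k : nat) : nat :=
  match k with
  | 0 => 0
  | 1 => 1
  | (k'.+1 as k1).+1 => fib k' + fib k1
  end.

Fixpoint lucas (k : nat) : nat :=
  match k with
  | 0 => 2
  | 1 => 1
  | (k'.+1 as k1).+1 => lucas k' + lucas k1
  end.

Local Open Scope ring_scope.

(* d = gcd(F_{n-2}+1, F_{n-1}-1)  (for n >= 3, F_{n-1} >= 1 so the nat
   subtraction is exact). *)
Definition dd (n : nat) : nat := gcdn (fib (n - 2)).+1 (fib (n - 1)).-1.

Definition mu (n : nat) : rat := ((fib (n - 1))%:R - 1) / (dd n)%:R.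
Definition nu (n : nat) : rat := ((fib (n - 2))%:R + 1) / (dd n)%:R.
Definition tt_ (n : nat) : rat :=
  ((lucas n)%:R - 1 - (-1) ^+ n) / (dd n)%:R.
Definition hh (n : nat) (r s : rat) : rat :=
  - (s * mu n + r * nu n) * (dd n)%:R.

(* Main.v *)
Require Import Defs.
From mathcomp Require Import all_boot all_order all_algebra.
From mathcomp Require Import ring lra zify.
Import Order.TTheory GRing.Theory Num.Theory.
Local Open Scope ring_scope.

Lemma fibSS (R : nzRingType) k : (fib k.+2)%:R = (fib k)%:R + (fib k.+1)%:R :> R.
Proof. by rewrite -natrD. Qed.

Lemma lucS (R : nzRingType) k : (lucas k.+1)%:R = (fib k)%:R + (fib k.+2)%:R :> R.
Proof.
rewrite -natrD; congr (_%:R).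
elim: k {-2}k (leqnn k) => [|k IH] [|[|j]] // hj.
have L : lucas j.+3 = (lucas j.+1 + lucas j.+2)%N by [].
have F4 : fib j.+4 = (fib j.+2 + fib j.+3)%N by [].
have F3 : fib j.+3 = (fib j.+1 + fib j.+2)%N by [].
have F2 : fib j.+2 = (fib j + fib j.+1)%N by [].
rewrite L (IH j) ?(IH j.+1); lia.
Qed.

Lemma fib_gt0 k : (0 < fib k.+1)%N.
Proof.
elim: k {-2}k (leqnn k) => [|k IH] [|[|j]] // hj.
have F3 : fib j.+3 = (fib j.+1 + fib j.+2)%N by [].
rewrite F3 addn_gt0 (IH j.+1) ?orbT //; lia.
Qed.

Lemma cassini (R : comNzRingType) k :
  (fib k.+1)%:R ^+ 2 - (fib k)%:R * (fib k.+2)%:R = (-1) ^+ k :> R.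
Proof.
elim: k => [|k IH]; first by rewrite /= expr1n mul0r subr0.
rewrite (exprS (-1)) -IH !fibSS; ring.
Qed.

Lemma gcd_bez (a b D : nat) (x y r s : int) :
  a%:Z = x * D%:Z -> b%:Z = y * D%:Z -> r * y + s * (y + x) = 1 -> gcdn a b = D.
Proof.
move=> ha hb hrs.
have Da : (D %| a)%N by have := dvdz_mull x (dvdzz D%:Z); rewrite -ha dvdzE.
have Db : (D %| b)%N by have := dvdz_mull y (dvdzz D%:Z); rewrite -hb dvdzE.
have ga : ((gcdn a b)%:Z %| a%:Z)%Z by rewrite dvdzE /= dvdn_gcdl.
have gb : ((gcdn a b)%:Z %| b%:Z)%Z by rewrite dvdzE /= dvdn_gcdr.
have gD : ((gcdn a b)%:Z %| D%:Z)%Z.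
  have -> : D%:Z = r * b%:Z + s * (b%:Z + a%:Z).
    by rewrite ha hb -{1}[D%:Z]mul1r -hrs; ring.
  by apply: rpredD; apply: dvdz_mull; rewrite ?rpredD.
apply/eqP; rewrite eqn_dvd dvdn_gcd Da Db andbT; by move: gD; rewrite dvdzE andbT.
Qed.

Lemma gcd_bez2 (a b : nat) (r s : int) :
  r * b%:Z + s * (b%:Z + a%:Z) = 2 -> (gcdn a b %| 2)%N.
Proof.
move=> hrs.
have ga : ((gcdn a b)%:Z %| a%:Z)%Z by rewrite dvdzE /= dvdn_gcdl.
have gb : ((gcdn a b)%:Z %| b%:Z)%Z by rewrite dvdzE /= dvdn_gcdr.
have : ((gcdn a b)%:Z %| 2%:R)%Z by rewrite -hrs; apply: rpredD; apply: dvdz_mull; rewrite ?rpredD.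
by rewrite dvdzE.
Qed.

Lemma fib_odd k : odd (fib k) = (k %% 3 != 0)%N.
Proof.
have H : forall j, [/\ odd (fib (3*j)) = false, odd (fib (3*j+1)) & odd (fib (3*j+2))].
  elim=> [|j [h0 h1 h2]] //.
  have e0 : (3 * j.+1 = (3*j+1).+2)%N by lia.
  have e1 : (3 * j.+1 + 1 = (3*j+2).+2)%N by lia.
  have e2 : (3 * j.+1 + 2 = (3*j.+1).+2)%N by lia.
  have e3 : ((3*j+1).+1 = 3*j+2)%N by lia.
  have e4 : ((3*j+2).+1 = 3*j.+1)%N by lia.
  have E : forall m, fib m.+2 = (fib m + fib m.+1)%N by [].
  have e5 : ((3*j.+1).+1 = 3*j.+1+1)%N by lia.
  have A : fib (3*j.+1) = (fib (3*j+1) + fib (3*j+2))%N by rewrite e0 E e3.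
  have B : fib (3*j.+1+1) = (fib (3*j+2) + fib (3*j.+1))%N by rewrite e1 E e4.
  have C : fib (3*j.+1+2) = (fib (3*j.+1) + fib (3*j.+1+1))%N by rewrite e2 E e5.
  have oA : odd (fib (3*j.+1)) = false by rewrite A oddD h1 h2.
  have oB : odd (fib (3*j.+1+1)) by rewrite B oddD h2 oA.
  by split => //; rewrite C oddD oA oB.
rewrite {1}(divn_eq k 3) mulnC.
have := ltn_pmod k (isT : (0 < 3)%N).
case: (k %% 3)%N => [|[|[|]]] // _; case: (H (k %/ 3)%N) => //.
by rewrite addn0 => ->.
Qed.

Lemma fib_add (R : comNzRingType) m n :
  (fib (m + n).+1)%:R = (fib m.+1)%:R * (fib n.+1)%:R + (fib m)%:R * (fib n)%:R :> R.
Proof.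
elim: n {-2}n (leqnn n) => [|k IH] [|[|j]] // hj.
1,2: by rewrite addn0 /= mulr0n mulr0 addr0 mulr1n mulr1.
- by rewrite addn1 fibSS (_ : fib 2 = 1%N) // (_ : fib 1 = 1%N) // mulr1n !mulr1 addrC.
have e : ((m + j.+2).+1 = ((m+j).+1).+2)%N by rewrite !addnS.
have I1 := IH j ltac:(lia).
have I2 := IH j.+1 ltac:(lia).
rewrite addnS in I2.
rewrite e fibSS I1 I2.
rewrite !fibSS; ring.
Qed.

Lemma fib4 (R : comNzRingType) m :
  [/\ (fib (4 * m+2))%:R = ((fib (2 * m))%:R+(fib (2 * m).+1)%:R) * (fib (2 * m).+1)%:R + (fib (2 * m).+1)%:R * (fib (2 * m))%:R :> R,
      (fib (4 * m+3))%:R = ((fib (2 * m))%:R+(fib (2 * m).+1)%:R)^+2 + (fib (2 * m).+1)%:R^+2 :> R,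
      (fib (4 * m+4))%:R = ((fib (2 * m))%:R+(fib (2 * m).+1)%:R) * ((fib (2 * m))%:R+(fib (2 * m).+1)%:R+(fib (2 * m).+1)%:R) + (fib (2 * m).+1)%:R * ((fib (2 * m))%:R+(fib (2 * m).+1)%:R) :> R
    & (fib (4 * m+5))%:R = ((fib (2 * m))%:R+(fib (2 * m).+1)%:R+(fib (2 * m).+1)%:R)^+2 + ((fib (2 * m))%:R+(fib (2 * m).+1)%:R)^+2 :> R].
Proof.
split.
- rewrite (_ : (4 * m+2 = ((2 * m).+1 + 2 * m).+1)%N); last lia.
  rewrite fib_add !fibSS; ring.
- rewrite (_ : (4 * m+3 = ((2 * m).+1 + (2 * m).+1).+1)%N); last lia.
  rewrite fib_add !fibSS; ring.
- rewrite (_ : (4 * m+4 = ((2 * m).+2 + (2 * m).+1).+1)%N); last lia.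
  rewrite fib_add !fibSS; ring.
- rewrite (_ : (4 * m+5 = ((2 * m).+2 + (2 * m).+2).+1)%N); last lia.
  rewrite fib_add !fibSS; ring.
Qed.

Lemma cass2 (R : comNzRingType) m :
  (fib (2 * m).+1)%:R ^+ 2 - (fib (2 * m))%:R * ((fib (2 * m))%:R + (fib (2 * m).+1)%:R) = 1 :> R.
Proof. by rewrite -fibSS cassini exprM sqrrN !expr1n. Qed.

Lemma lucas_gt0 k : (0 < lucas k)%N.
Proof.
elim: k {-2}k (leqnn k) => [|k IH] [|[|j]] // hj.
have L : lucas j.+2 = (lucas j + lucas j.+1)%N by [].
rewrite L addn_gt0 (IH j) //; lia.
Qed.

Lemma case1 (n : nat) (hn : (3 <= n)%N) : (n %% 4 = 0)%N ->
        let r : rat := (fib (n %/ 2 - 1))%:R in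
        let s : rat := - (fib (n %/ 2 - 2))%:R in
        [/\ dd n = fib (n %/ 2), tt_ n = 5 * (fib (n %/ 2))%:R,
            r * mu n + s * (mu n + nu n) = 1
          & hh n r s = - 2 * (fib (n %/ 2))%:R].
Proof.
move=> h; cbv zeta.
have [m En] : exists m, n = (4 * m + 4)%N by exists (n %/ 4 - 1)%N; lia.
subst n.
rewrite (_ : ((4 * m + 4) %/ 2 - 1 = (2 * m).+1)%N); last lia.
rewrite (_ : ((4 * m + 4) %/ 2 - 2 = (2 * m))%N); last lia.
rewrite (_ : ((4 * m + 4) %/ 2 = (2 * m).+2)%N); last lia.
have Ed : dd (4 * m + 4) = fib (2 * m).+2.
  rewrite /dd (_ : (4 * m + 4 - 2 = 4 * m + 2)%N); last lia.
  rewrite (_ : (4 * m + 4 - 1 = 4 * m + 3)%N); last lia.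
  have g3 : (0 < fib (4 * m + 3))%N.
    by rewrite (_ : (4 * m + 3 = (4 * m + 2).+1)%N); [exact: fib_gt0 | lia].
  have := fib4 int m; move=> -[F2 F3 F4 F5].
  have C := cass2 int m.
  apply: (@gcd_bez _ _ _ (2 * (fib (2 * m).+1)%:R - (fib (2 * m))%:R)
                         (2 * (fib (2 * m))%:R + (fib (2 * m).+1)%:R)
                         (fib (2 * m).+1)%:R (- (fib (2 * m))%:R)).
  - rewrite intS -!natz F2 fibSS; lra.
  - rewrite predn_int // -!natz F3 fibSS; lra.
  - lra.
have := fib4 rat m; move=> -[F2 F3 F4 F5].
have C := cass2 rat m.
have Dn0 : (fib (2 * m).+2)%:R != 0 :> rat by rewrite pnatr_eq0 -lt0n fib_gt0.
have Hmu : mu (4 * m + 4) = 2 * (fib (2 * m))%:R + (fib (2 * m).+1)%:R.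
  rewrite /mu Ed (_ : (4 * m + 4 - 1 = 4 * m + 3)%N); last lia.
  apply: (mulIf Dn0); rewrite divfK // F3 fibSS; lra.
have Hnu : nu (4 * m + 4) = 2 * (fib (2 * m).+1)%:R - (fib (2 * m))%:R.
  rewrite /nu Ed (_ : (4 * m + 4 - 2 = 4 * m + 2)%N); last lia.
  apply: (mulIf Dn0); rewrite divfK // F2 fibSS; lra.
split => //.
- rewrite /tt_ Ed (_ : (4 * m + 4 = (4 * m + 3).+1)%N); last lia.
  rewrite lucS (_ : ((4 * m + 3).+2 = 4 * m + 5)%N); last lia.
  rewrite -signr_odd (_ : odd (4 * m + 3).+1 = false); last by rewrite /= oddD oddM.
  apply: (mulIf Dn0); rewrite divfK // F3 F5 !fibSS; lra.
- rewrite Hmu Hnu; lra.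
- have C' := congr1 (fun x => x * ((fib (2 * m))%:R + (fib (2 * m).+1)%:R)) C.
  rewrite /= mul1r in C'.
  rewrite /hh Hmu Hnu Ed fibSS; lra.
Qed.

Lemma case2 (n : nat) (hn : (3 <= n)%N) : (n %% 4 = 2)%N ->
        let r : rat := (fib (n %/ 2 - 2))%:R in
        let s : rat := - (fib (n %/ 2 - 3))%:R in
        [/\ dd n = lucas (n %/ 2), tt_ n = (lucas (n %/ 2))%:R,
            r * mu n + s * (mu n + nu n) = 1
          & hh n r s = - (lucas (n %/ 2))%:R].
Proof.
move=> h; cbv zeta.
have [m En] : exists m, n = (4 * m + 6)%N by exists (n %/ 4 - 1)%N; lia.
subst n.
rewrite (_ : ((4 * m + 6) %/ 2 - 2 = (2 * m).+1)%N); last lia.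
rewrite (_ : ((4 * m + 6) %/ 2 - 3 = (2 * m))%N); last lia.
rewrite (_ : ((4 * m + 6) %/ 2 = (2 * m).+3)%N); last lia.
have F6 : forall R : comNzRingType, (fib (4 * m + 6))%:R = (fib (4 * m + 4))%:R + (fib (4 * m + 5))%:R :> R.
  move=> R; rewrite (_ : (4 * m + 6 = (4 * m + 4).+2)%N); last lia.
  by rewrite fibSS (_ : ((4 * m + 4).+1 = 4 * m + 5)%N); last lia.
have F7 : forall R : comNzRingType, (fib (4 * m + 7))%:R = (fib (4 * m + 5))%:R + (fib (4 * m + 6))%:R :> R.
  move=> R; rewrite (_ : (4 * m + 7 = (4 * m + 5).+2)%N); last lia.
  by rewrite fibSS (_ : ((4 * m + 5).+1 = 4 * m + 6)%N); last lia.
have Ed : dd (4 * m + 6) = lucas (2 * m).+3.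
  rewrite /dd (_ : (4 * m + 6 - 2 = 4 * m + 4)%N); last lia.
  rewrite (_ : (4 * m + 6 - 1 = 4 * m + 5)%N); last lia.
  have g3 : (0 < fib (4 * m + 5))%N.
    by rewrite (_ : (4 * m + 5 = (4 * m + 4).+1)%N); [exact: fib_gt0 | lia].
  have := fib4 int m; move=> -[F2 F3 F4 F5].
  have C := cass2 int m.
  apply: (@gcd_bez _ _ _ (fib (2 * m).+1)%:R
                         ((fib (2 * m))%:R + (fib (2 * m).+1)%:R)
                         (fib (2 * m).+1)%:R (- (fib (2 * m))%:R)).
  - rewrite intS -!natz F4 lucS !fibSS; lra.
  - rewrite predn_int // -!natz F5 lucS !fibSS; lra.
  - lra.
have := fib4 rat m; move=> -[F2 F3 F4 F5].
have C := cass2 rat m.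
have Dpos : (0 < lucas (2 * m).+3)%N.
  exact: lucas_gt0.
have Dn0 : (lucas (2 * m).+3)%:R != 0 :> rat by rewrite pnatr_eq0 -lt0n.
have Hmu : mu (4 * m + 6) = (fib (2 * m))%:R + (fib (2 * m).+1)%:R.
  rewrite /mu Ed (_ : (4 * m + 6 - 1 = 4 * m + 5)%N); last lia.
  apply: (mulIf Dn0); rewrite divfK // F5 lucS !fibSS; lra.
have Hnu : nu (4 * m + 6) = (fib (2 * m).+1)%:R.
  rewrite /nu Ed (_ : (4 * m + 6 - 2 = 4 * m + 4)%N); last lia.
  apply: (mulIf Dn0); rewrite divfK // F4 lucS !fibSS; lra.
split => //.
- rewrite /tt_ Ed (_ : (4 * m + 6 = (4 * m + 5).+1)%N); last lia.
  rewrite lucS (_ : ((4 * m + 5).+2 = 4 * m + 7)%N); last lia.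
  rewrite -signr_odd (_ : odd (4 * m + 5).+1 = false); last by rewrite /= oddD oddM.
  apply: (mulIf Dn0); rewrite divfK // F7 F6 F4 F5 lucS !fibSS; lra.
- rewrite Hmu Hnu; lra.
- have C' := congr1 (fun x => x * (3 * (fib (2 * m))%:R + 4 * (fib (2 * m).+1)%:R)) C.
  rewrite /= mul1r in C'.
  rewrite /hh Hmu Hnu Ed lucS !fibSS; lra.
Qed.

Lemma odd_setup (n : nat) (hn : (3 <= n)%N) (ho : odd n) :
  exists k, n = (2 * k + 3)%N.
Proof. by exists ((n - 3) %/ 2)%N; move: ho; rewrite -[odd n]/(odd n) => ho; lia. Qed.

Lemma dd_dvd2 k : (dd (2 * k + 3) %| 2)%N.
Proof.
rewrite /dd (_ : (2 * k + 3 - 2 = (2 * k).+1)%N); last lia.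
rewrite (_ : (2 * k + 3 - 1 = (2 * k).+2)%N); last lia.
have g : (0 < fib (2 * k).+2)%N by exact: fib_gt0.
have C := cass2 int k.
apply: (@gcd_bez2 _ _ ((fib (2 * k).+1)%:R - 1) (1 - (fib (2 * k))%:R)).
rewrite intS predn_int // -!natz fibSS; lra.
Qed.

Lemma dd_cases k : dd (2 * k + 3) = 1%N \/ dd (2 * k + 3) = 2%N.
Proof.
have h := dd_dvd2 k.
have h1 := dvdn_leq (isT : (0 < 2)%N) h.
have h2 : dd (2 * k + 3) != 0%N by apply: contraTneq h => ->.
lia.
Qed.

Lemma dd_two k : (2 %| dd (2 * k + 3))%N = ((2 * k + 3) %% 3 == 0)%N.
Proof.
rewrite /dd (_ : (2 * k + 3 - 2 = (2 * k).+1)%N); last lia.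
rewrite (_ : (2 * k + 3 - 1 = (2 * k).+2)%N); last lia.
have g : (0 < fib (2 * k).+2)%N by exact: fib_gt0.
have o : odd (fib (2 * k).+2) = ~~ odd (fib (2 * k).+2).-1.
  by rewrite -{1}(prednK g).
rewrite dvdn_gcd !dvdn2 -[odd (fib (2 * k).+1).+1]/(~~ odd (fib (2 * k).+1)) negbK.
rewrite -o !fib_odd.
apply/idP/idP; lia.
Qed.

Lemma case3 (n : nat) (hn : (3 <= n)%N) : (n %% 12 \in [:: 1; 5; 7; 11])%N ->
        let r : rat := ((fib (n - 2))%:R - 1) / 2 in
        let s : rat := (1 - (fib (n - 3))%:R) / 2 in
        [/\ dd n = 1%N, tt_ n = (lucas n)%:R,
            r * mu n + s * (mu n + nu n) = 1
          & hh n r s = (1 - (lucas (n - 2))%:R) / 2].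
Proof.
rewrite !inE => h; cbv zeta.
have ho : odd n by move: h; lia.
have [k En] := @odd_setup n hn ho.
subst n.
have Ed : dd (2 * k + 3) = 1%N.
  case: (dd_cases k) => // h2.
  have := dd_two k; rewrite h2 dvdnn => /esym/eqP; move: h; lia.
rewrite (_ : (2 * k + 3 - 2 = (2 * k).+1)%N); last lia.
rewrite (_ : (2 * k + 3 - 3 = (2 * k))%N); last lia.
have C := cass2 rat k.
have Hmu : mu (2 * k + 3) = (fib (2 * k))%:R + (fib (2 * k).+1)%:R - 1.
  rewrite /mu Ed (_ : (2 * k + 3 - 1 = (2 * k).+2)%N); last lia.
  by rewrite divr1 fibSS.
have Hnu : nu (2 * k + 3) = (fib (2 * k).+1)%:R + 1.
  rewrite /nu Ed (_ : (2 * k + 3 - 2 = (2 * k).+1)%N); last lia.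
  by rewrite divr1.
split => //.
- rewrite /tt_ Ed divr1 -signr_odd (_ : odd (2 * k + 3) = true); last first.
    by rewrite oddD oddM.
  by rewrite expr1 opprK subrK.
- rewrite Hmu Hnu; lra.
- rewrite /hh Hmu Hnu Ed lucS !fibSS; lra.
Qed.

Lemma case4 (n : nat) (hn : (3 <= n)%N) : (n %% 12 \in [:: 3; 9])%N ->
        let r : rat := (fib (n - 2))%:R - 1 in
        let s : rat := 1 - (fib (n - 3))%:R in
        [/\ dd n = 2%N, tt_ n = (lucas n)%:R / 2,
            r * mu n + s * (mu n + nu n) = 1
          & hh n r s = 1 - (lucas (n - 2))%:R].
Proof.
rewrite !inE => h; cbv zeta.
have ho : odd n by move: h; lia.
have [k En] := @odd_setup n hn ho.
subst n.
have Ed : dd (2 * k + 3) = 2%N.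
  case: (dd_cases k) => // h2.
  have := dd_two k; rewrite h2 => E.
  have : ((2 * k + 3) %% 3 == 0)%N = false by rewrite -E.
  move/negbT/eqP; move: h; lia.
rewrite (_ : (2 * k + 3 - 2 = (2 * k).+1)%N); last lia.
rewrite (_ : (2 * k + 3 - 3 = (2 * k))%N); last lia.
have C := cass2 rat k.
have Hmu : mu (2 * k + 3) = ((fib (2 * k))%:R + (fib (2 * k).+1)%:R - 1) / 2.
  rewrite /mu Ed (_ : (2 * k + 3 - 1 = (2 * k).+2)%N); last lia.
  by rewrite fibSS.
have Hnu : nu (2 * k + 3) = ((fib (2 * k).+1)%:R + 1) / 2.
  rewrite /nu Ed (_ : (2 * k + 3 - 2 = (2 * k).+1)%N); last lia.
  by [].
split => //.
- rewrite /tt_ Ed -signr_odd (_ : odd (2 * k + 3) = true); last first.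
    by rewrite oddD oddM.
  by rewrite expr1 opprK subrK.
- rewrite Hmu Hnu; lra.
- rewrite /hh Hmu Hnu Ed lucS !fibSS; lra.
Qed.

Theorem proposition2p3p1 (n : nat) (hn : (3 <= n)%N) :
  [/\ (n %% 4 = 0)%N ->
        let r : rat := (fib (n %/ 2 - 1))%:R in
        let s : rat := - (fib (n %/ 2 - 2))%:R in
        [/\ dd n = fib (n %/ 2), tt_ n = 5 * (fib (n %/ 2))%:R,
            r * mu n + s * (mu n + nu n) = 1
          & hh n r s = - 2 * (fib (n %/ 2))%:R],
      (n %% 4 = 2)%N ->
        let r : rat := (fib (n %/ 2 - 2))%:R in
        let s : rat := - (fib (n %/ 2 - 3))%:R in
        [/\ dd n = lucas (n %/ 2), tt_ n = (lucas (n %/ 2))%:R,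
            r * mu n + s * (mu n + nu n) = 1
          & hh n r s = - (lucas (n %/ 2))%:R],
      (n %% 12 \in [:: 1; 5; 7; 11])%N ->
        let r : rat := ((fib (n - 2))%:R - 1) / 2 in
        let s : rat := (1 - (fib (n - 3))%:R) / 2 in
        [/\ dd n = 1%N, tt_ n = (lucas n)%:R,
            r * mu n + s * (mu n + nu n) = 1
          & hh n r s = (1 - (lucas (n - 2))%:R) / 2]
    & (n %% 12 \in [:: 3; 9])%N ->
        let r : rat := (fib (n - 2))%:R - 1 in
        let s : rat := 1 - (fib (n - 3))%:R in
        [/\ dd n = 2%N, tt_ n = (lucas n)%:R / 2,
            r * mu n + s * (mu n + nu n) = 1
          & hh n r s = 1 - (lucas (n - 2))%:R]].
Proof.
split; [exact: (@case1 n hn) | exact: (@case2 n hn) | exact: (@case3 n hn) | exact: (@case4 n hn)].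
Qed.
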